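(* Let $P=(P_1,P_2,P_3)$ be the Pauli tuple and $\overline{P}=(P_1,P_2,-P_3)$ its entrywise complex conjugate. Then $\mathcal D_P=\mathcal D_P^\circ$ and $\mathcal D_{\overline{P}}=\mathcal D_{\overline{P}}^\circ$. Consequently $\mathcal D_P=\mathrm{mconv}(P)$, $P$ is a free extreme point of $\mathcal D_P$, every free extreme point of $\mathcal D_P$ is unitarily equivalent to $P$, and $\mathcal D_P$ is the matrix convex hull of its free extreme points.
   Context: $SM_n(\mathbb F)^g$ denotes the set of $g$-tuples of self-adjoint $n\times n$ matrices with entries in $\mathbb F\in\{\mathbb R,\mathbb C\}$, and $SM^g=\bigcup_n SM_n(\mathbb C)^g$. For $A=(A_1,\dots,A_g)\in SM_d(\mathbb C)^g$, the free spectrahedron is $\mathcal D_A=\bigcup_{n\ge1}\mathcal D_A(n)$ with $\mathcal D_A(n)=\{X\in SM_n(\mathbb C)^g: I-\sum_{i=1}^g A_i\otimes X_i\succeq 0\}$. A matrix convex set is a graded set $K=\bigcup_n K(n)$, $K(n)\subseteq SM_n^g$, closed under matrix convex combinations $\sum_{i} V_i^*X^{(i)}V_i$ with $X^{(i)}\in K(n_i)$, $V_i\in M_{n_i\times n}$, $\sum_i V_i^*V_i=I_n$; $\mathrm{mconv}(S)$ is the smallest matrix convex set containing $S$ (no closure). The free polar dual of a matrix convex set $K$ in $g$ variables is $K^\circ=\{X\in SM^g:\ \sum_{i=1}^g Y_i\otimes X_i\preceq I \text{ for all } Y\in K\}$. A point $X\in K(n)$ is a free extreme point of $K$ if whenever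 $X=\sum_i V_i^*X^{(i)}V_i$ is a matrix convex combination of points $X^{(i)}\in K$ with all $V_i\neq0$, each $X^{(i)}$ is unitarily equivalent to $X$ or to $X\oplus Z$ for some $Z\in K$. The Pauli tuple is $P=\left(\begin{bmatrix}1&0\\0&-1\end{bmatrix},\begin{bmatrix}0&1\\1&0\end{bmatrix},\begin{bmatrix}0&i\\-i&0\end{bmatrix}\right)$. *)

(* Defs.v *)
From HB Require Import structures.
From mathcomp Require Import all_boot all_order all_algebra.
From mathcomp Require Import complex mxtens.
From mathcomp Require Import reals.
Set Implicit Arguments. Unset Strict Implicit. Unset Printing Implicit Defensive.
Import Order.TTheory GRing.Theory Num.Theory.
Local Open Scope ring_scope.

Section FreeSpec.
Variable R : realType.
Local Notation C := R[i].

Definition adjmx (m n : nat) (A : 'M[C]_(m, n)) : 'M[C]_(n, m) :=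
  (map_mx Num.conj A)^T.

Definition selfadj (n : nat) (A : 'M[C]_n) : Prop := adjmx A = A.

Definition psd (n : nat) (A : 'M[C]_n) : Prop :=
  selfadj A /\ forall v : 'cV[C]_n, 0 <= (adjmx v *m A *m v) 0 0.

Definition tup (g n : nat) := 'I_g -> 'M[C]_n.

Definition SM (g n : nat) (X : tup g n) : Prop := forall i, selfadj (X i).

(* graded sets: K n is the level-n part K(n); only levels n >= 1 are meaningful *)
Definition gset (g : nat) := forall n : nat, tup g n -> Prop.

Definition gset_eq (g : nat) (K L : gset g) : Prop :=
  forall n, (0 < n)%N -> forall X : tup g n, K n X <-> L n X.

Definition gsubset (g : nat) (K L : gset g) : Prop :=
  forall n, (0 < n)%N -> forall X : tup g n, K n X -> L n X.

Definition pencil (g d n : nat) (A : tup g d) (X : tup g n) : 'M[C]_(d * n) :=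
  1%:M - \sum_(i < g) (A i *t X i).

Definition spectra (g d : nat) (A : tup g d) : gset g :=
  fun n X => (0 < n)%N /\ SM X /\ psd (pencil A X).

Definition polar (g : nat) (K : gset g) : gset g :=
  fun n X => (0 < n)%N /\ SM X /\
    forall m (Y : tup g m), (0 < m)%N -> K m Y -> psd (pencil Y X).

(* a term of a matrix convex combination (families are indexed by 'I_k) landing in level n:
   a point X^(j) of level m_j together with V_j : M_{m_j x n} *)
Definition mcterm (g n : nat) := {m : nat & (tup g m * 'M[C]_(m, n))%type}.

Definition mc_level (g n : nat) (t : mcterm g n) : nat := tag t.
Definition mc_pt (g n : nat) (t : mcterm g n) : tup g (mc_level t) := (tagged t).1.
Definition mc_V (g n : nat) (t : mcterm g n) : 'M[C]_(mc_level t, n) := (tagged t).2.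

Definition is_mcc (g : nat) (K : gset g) (n k : nat) (ts : 'I_k -> mcterm g n) : Prop :=
  (forall j, (0 < mc_level (ts j))%N /\ K (mc_level (ts j)) (mc_pt (ts j))) /\
  \sum_(j < k) (adjmx (mc_V (ts j)) *m mc_V (ts j)) = 1%:M.

Definition mcc_val (g n k : nat) (ts : 'I_k -> mcterm g n) : tup g n :=
  fun i => \sum_(j < k) (adjmx (mc_V (ts j)) *m mc_pt (ts j) i *m mc_V (ts j)).

Definition matconvex (g : nat) (K : gset g) : Prop :=
  (forall n (X : tup g n), (0 < n)%N -> K n X -> SM X) /\
  forall n k (ts : 'I_k -> mcterm g n), (0 < n)%N -> is_mcc K ts -> K n (mcc_val ts).

Definition mconv (g : nat) (S : gset g) : gset g :=
  fun n X => (0 < n)%N /\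
    forall K : gset g, matconvex K -> gsubset S K -> K n X.

Definition gpoint (g d : nat) (P : tup g d) : gset g :=
  fun n X => exists e : d = n, (fun i => castmx (e, e) (P i)) = X.

(* unitary equivalence: X = U^* Y U with U unitary (U^* U = I, U U^* = I,
   which forces the sizes to agree) *)
Definition ueq (g n m : nat) (X : tup g n) (Y : tup g m) : Prop :=
  exists U : 'M[C]_(m, n),
    adjmx U *m U = 1%:M /\ U *m adjmx U = 1%:M /\
    forall i, adjmx U *m Y i *m U = X i.

Definition dsum (g n m : nat) (X : tup g n) (Z : tup g m) : tup g (n + m) :=
  fun i => block_mx (X i) 0 0 (Z i).

Definition free_extreme (g : nat) (K : gset g) : gset g :=
  fun n X => (0 < n)%N /\ K n X /\
    forall k (ts : 'I_k -> mcterm g n),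
      is_mcc K ts ->
      (forall j, mc_V (ts j) != 0) ->
      mcc_val ts = X ->
      forall j,
        ueq (mc_pt (ts j)) X \/
        exists m (Z : tup g m), (0 < m)%N /\ K m Z /\ ueq (mc_pt (ts j)) (dsum X Z).

Definition mx2 (a b c d : C) : 'M[C]_2 :=
  \matrix_(i < 2, j < 2)
    if (i : nat) == 0%N then (if (j : nat) == 0%N then a else b)
    else (if (j : nat) == 0%N then c else d).

Definition triple (A1 A2 A3 : 'M[C]_2) : tup 3 2 :=
  fun k => match (k : nat) with 0 => A1 | 1 => A2 | _ => A3 end.

Local Open Scope complex_scope.
Definition Pauli : tup 3 2 :=
  triple (mx2 1 0 0 (-1)) (mx2 0 1 1 0) (mx2 0 'i (- 'i) 0).
Definition Pauli_bar : tup 3 2 :=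
  triple (mx2 1 0 0 (-1)) (mx2 0 1 1 0) (- mx2 0 'i (- 'i) 0).

End FreeSpec.

(* Main.v *)
Require Import Defs.
From HB Require Import structures.
From mathcomp Require Import all_boot all_order all_algebra.
From mathcomp Require Import complex mxtens.
From mathcomp Require Import reals.
From mathcomp Require Import spectral sesquilinear.
From mathcomp Require Import ring zify.
From Stdlib Require Import FunctionalExtensionality ClassicalEpsilon.
Set Implicit Arguments. Unset Strict Implicit. Unset Printing Implicit Defensive.
Import Order.TTheory GRing.Theory Num.Theory.
Local Open Scope ring_scope.

Section Basics.
Variable R : realType.
Local Notation C := R[i].
Local Notation adj := (@adjmx R _ _).

Lemma adjE m n (A : 'M[C]_(m, n)) i j : adjmx A i j = (A j i)^*.
Proof. by rewrite !mxE. Qed.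

Lemma adjK m n (A : 'M[C]_(m, n)) : adjmx (adjmx A) = A.
Proof. by apply/matrixP=> i j; rewrite !adjE conjCK. Qed.

Lemma adjM m n p (A : 'M[C]_(m, n)) (B : 'M[C]_(n, p)) :
  adjmx (A *m B) = adjmx B *m adjmx A.
Proof.
apply/matrixP=> i j; rewrite adjE !mxE rmorph_sum; apply: eq_bigr => k _.
by rewrite !adjE rmorphM mulrC.
Qed.

Lemma adjD m n (A B : 'M[C]_(m, n)) : adjmx (A + B) = adjmx A + adjmx B.
Proof. by apply/matrixP=> i j; rewrite !mxE rmorphD. Qed.

Lemma adjN m n (A : 'M[C]_(m, n)) : adjmx (- A) = - adjmx A.
Proof. by apply/matrixP=> i j; rewrite !mxE rmorphN. Qed.

Lemma adjB m n (A B : 'M[C]_(m, n)) : adjmx (A - B) = adjmx A - adjmx B.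
Proof. by rewrite adjD adjN. Qed.

Lemma adj0 m n : adjmx (0 : 'M[C]_(m, n)) = 0.
Proof. by apply/matrixP=> i j; rewrite !mxE rmorph0. Qed.

Lemma adjZ m n a (A : 'M[C]_(m, n)) : adjmx (a *: A) = a^* *: adjmx A.
Proof. by apply/matrixP=> i j; rewrite !mxE rmorphM. Qed.

Lemma adj_scalar n a : adjmx (a%:M : 'M[C]_n) = (a^*)%:M.
Proof.
by apply/matrixP=> i j; rewrite !mxE eq_sym rmorphMn.
Qed.

Lemma adj1 n : adjmx (1%:M : 'M[C]_n) = 1%:M.
Proof. by rewrite adj_scalar conjC1. Qed.

Lemma adj_sum m n I (r : seq I) (P : pred I) (F : I -> 'M[C]_(m, n)) :
  adjmx (\sum_(i <- r | P i) F i) = \sum_(i <- r | P i) adjmx (F i).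
Proof.
elim/big_rec2: _ => [|i x y _ <-]; first exact: adj0.
by case: (P i); rewrite ?adjD.
Qed.

Lemma adj_tens m n p q (A : 'M[C]_(m, n)) (B : 'M[C]_(p, q)) :
  adjmx (A *t B) = adjmx A *t adjmx B.
Proof. by apply/matrixP=> i j; rewrite !mxE rmorphM. Qed.

End Basics.
Section Psd.
Variable R : realType.
Local Notation C := R[i].

Lemma qformE n (A : 'M[C]_n) (v : 'cV[C]_n) :
  (adjmx v *m A *m v) 0 0 = \sum_i \sum_j (v i 0)^* * A i j * v j 0.
Proof.
rewrite exchange_big mxE; apply: eq_bigr => j _; rewrite mxE mulr_suml; apply: eq_bigr => i _.
by rewrite adjE.
Qed.

Lemma psd_congr m n (A : 'M[C]_m) (W : 'M[C]_(m, n)) :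
  psd A -> psd (adjmx W *m A *m W).
Proof.
move=> [sA pA]; split.
  by rewrite /selfadj !adjM adjK sA mulmxA.
move=> v; have := pA (W *m v); by rewrite adjM !mulmxA.
Qed.

Lemma psd_add n (A B : 'M[C]_n) : psd A -> psd B -> psd (A + B).
Proof.
move=> [sA pA] [sB pB]; split; first by rewrite /selfadj adjD sA sB.
by move=> v; rewrite mulmxDr mulmxDl mxE addr_ge0.
Qed.

Lemma psd0 n : psd (0 : 'M[C]_n).
Proof. by split; [rewrite /selfadj adj0 | move=> v; rewrite mulmx0 mul0mx mxE]. Qed.

Lemma psd_sum n I (r : seq I) (P : pred I) (F : I -> 'M[C]_n) :
  (forall i, P i -> psd (F i)) -> psd (\sum_(i <- r | P i) F i).
Proof.
move=> H; elim/big_rec: _ => [|i x Pi Hx]; first exact: psd0.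
by apply: psd_add => //; apply: H.
Qed.

Lemma psd_factor m n (B : 'M[C]_(m, n)) : psd (adjmx B *m B).
Proof.
split; first by rewrite /selfadj adjM adjK.
move=> v; rewrite mulmxA -adjM -mulmxA mxE sumr_ge0 // => i _.
by rewrite adjE mulrC mul_conjC_ge0.
Qed.

Lemma psd_scale n (c : C) (A : 'M[C]_n) : 0 <= c -> psd A -> psd (c *: A).
Proof.
move=> c0 [sA pA]; split.
  by rewrite /selfadj adjZ sA conj_Creal // ger0_real.
by move=> v; rewrite -scalemxAr -scalemxAl mxE mulr_ge0.
Qed.

Lemma psd_conj n (A : 'M[C]_n) : psd A -> psd (map_mx Num.conj A).
Proof.
move=> [sA pA]; split.
  apply/matrixP => i j; rewrite adjE !mxE.
  have /matrixP/(_ i j) := (sA : adjmx A = A); rewrite adjE => <-.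
  by rewrite conjCK.
move=> v; have := pA (map_mx Num.conj v); rewrite !qformE -conjC_ge0.
rewrite rmorph_sum; congr (0 <= _); apply: eq_bigr => i _.
rewrite rmorph_sum; apply: eq_bigr => j _; rewrite !mxE !rmorphM.
by congr (_ * _ * _); apply: conjCK.
Qed.

End Psd.
Section Fact.
Variable R : realType.
Local Notation C := R[i].

Lemma adj_tstar m n (A : 'M[C]_(m, n)) : map_mx Num.conj (trmx A) = adjmx A.
Proof. by apply/matrixP=> i j; rewrite !mxE. Qed.

Lemma psd_factorize n (M : 'M[C]_n) : psd M -> exists B : 'M[C]_n, M = adjmx B *m B.
Proof.
move=> [sM pM].
have nM : M \is normalmx.
  by apply/normalmxP; rewrite adj_tstar (sM : adjmx M = M).
have [[Q d] /= Qu eM] := orthomx_spectral_subproof nM.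
rewrite invmx_unitary // adj_tstar in eM.
have QQ : Q *m adjmx Q = 1%:M by rewrite -adj_tstar; apply/unitarymxP.
have QMQ : Q *m M *m adjmx Q = diag_mx d.
  by rewrite eM !mulmxA QQ mul1mx -mulmxA QQ mulmx1.
have d0 : forall k, 0 <= d 0 k.
  move=> k; have := pM (col k (adjmx Q)).
  suff -> : (adjmx (col k (adjmx Q)) *m M *m col k (adjmx Q)) 0 0 = d 0 k by [].
  have := congr1 (fun X : 'M[C]_n => X k k) QMQ; rewrite /= !mxE eqxx mulr1n => <-.
  apply: eq_bigr => j _; rewrite !mxE; congr (_ * _).
  by apply: eq_bigr => i _; rewrite !mxE conjCK.
pose s := \row_k sqrtC (d 0 k).
exists (diag_mx s *m Q).
rewrite adjM -mulmxA [X in _ = _ *m X]mulmxA.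
have -> : adjmx (diag_mx s) *m diag_mx s = diag_mx d.
  apply/matrixP=> i j; rewrite mul_mx_diag !mxE.
  case: (eqVneq i j) => [->|nij]; last by rewrite !mulr0n rmorph0 mul0r.
  rewrite !mulr1n conj_Creal; last by rewrite ger0_real // sqrtC_ge0.
  by rewrite -expr2 sqrtCK.
by rewrite eM mulmxA.
Qed.

End Fact.
Section Tens.
Variable R : realType.
Local Notation C := R[i].

Lemma tens1 m n : (1%:M : 'M[C]_(m * n)) = (1%:M : 'M_m) *t (1%:M : 'M_n).
Proof.
apply/matrixP=> i j.
case: (mxtens_indexP i) => a b; case: (mxtens_indexP j) => c e.
rewrite tensmxE !mxE (can_eq (@mxtens_indexK _ _)) xpair_eqE.
by case: (a == c); case: (b == e); rewrite ?mulr1 ?mulr0.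
Qed.

Lemma tens_suml m n p q I (r : seq I) (P : pred I) (F : I -> 'M[C]_(m, n)) (B : 'M[C]_(p, q)) :
  (\sum_(i <- r | P i) F i) *t B = \sum_(i <- r | P i) (F i *t B).
Proof.
apply/matrixP=> x y; rewrite summxE [LHS]mxE summxE mulr_suml; apply: eq_bigr => i _.
by rewrite !mxE.
Qed.

Lemma tens_sumr m n p q I (r : seq I) (P : pred I) (A : 'M[C]_(m, n)) (F : I -> 'M[C]_(p, q)) :
  A *t (\sum_(i <- r | P i) F i) = \sum_(i <- r | P i) (A *t F i).
Proof.
apply/matrixP=> x y; rewrite summxE [LHS]mxE summxE mulr_sumr; apply: eq_bigr => i _.
by rewrite !mxE.
Qed.

Lemma pencil_mcc g d n k (A : tup R g d) (ts : 'I_k -> mcterm R g n) :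
  \sum_j adjmx (mc_V (ts j)) *m mc_V (ts j) = 1%:M ->
  pencil A (mcc_val ts) =
  \sum_j adjmx (1%:M *t mc_V (ts j)) *m pencil A (mc_pt (ts j)) *m (1%:M *t mc_V (ts j)).
Proof.
move=> hV.
have e : forall j, adjmx (1%:M *t mc_V (ts j)) *m pencil A (mc_pt (ts j)) *m (1%:M *t mc_V (ts j))
   = 1%:M *t (adjmx (mc_V (ts j)) *m mc_V (ts j)) -
     \sum_i (A i *t (adjmx (mc_V (ts j)) *m mc_pt (ts j) i *m mc_V (ts j))).
  move=> j; rewrite /pencil adj_tens adj1 mulmxBr mulmxBl mulmx1 tensmx_mul mul1mx.
  congr (_ - _); rewrite mulmx_sumr mulmx_suml; apply: eq_bigr => i _.
  by rewrite !tensmx_mul mul1mx mulmx1.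
under eq_bigr do rewrite e.
rewrite sumrB -tens_sumr hV -tens1.
rewrite /pencil; congr (_ - _); rewrite exchange_big; apply: eq_bigr => i _.
by rewrite tens_sumr.
Qed.

Lemma pencil_left g d m n k (A : tup R g d) (X : tup R g n) (K : 'I_k -> 'M[C]_(d, m)) :
  \sum_l adjmx (K l) *m K l = 1%:M ->
  pencil (fun i => \sum_l adjmx (K l) *m A i *m K l) X =
  \sum_l adjmx (K l *t 1%:M) *m pencil A X *m (K l *t 1%:M).
Proof.
move=> hK.
have e : forall l, adjmx (K l *t 1%:M) *m pencil A X *m (K l *t 1%:M)
   = (adjmx (K l) *m K l) *t 1%:M -
     \sum_i ((adjmx (K l) *m A i *m K l) *t X i).
  move=> l; rewrite /pencil adj_tens adj1 mulmxBr mulmxBl mulmx1 tensmx_mul mul1mx.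
  congr (_ - _); rewrite mulmx_sumr mulmx_suml; apply: eq_bigr => i _.
  by rewrite !tensmx_mul mul1mx mulmx1.
under eq_bigr do rewrite e.
rewrite sumrB -tens_suml hK -tens1.
rewrite /pencil; congr (_ - _); rewrite exchange_big; apply: eq_bigr => i _.
by rewrite tens_suml.
Qed.

End Tens.
Section MC.
Variable R : realType.
Local Notation C := R[i].

Lemma SM_mcc g n k (ts : 'I_k -> mcterm R g n) :
  (forall j, SM (mc_pt (ts j))) -> SM (mcc_val ts).
Proof.
move=> h i; rewrite /selfadj /mcc_val adj_sum; apply: eq_bigr => j _.
by rewrite !adjM adjK (h j i : adjmx _ = _) mulmxA.
Qed.

Lemma spectra_matconvex g d (A : tup R g d) : matconvex (spectra A).
Proof.
split; first by move=> n X _ [_ []].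
move=> n k ts n0 [hK hV]; split => //; split.
  by apply: SM_mcc => j; have [_ [_ []]] := hK j.
rewrite pencil_mcc //; apply: psd_sum => j _; apply: psd_congr.
by have [_ [_ []]] := hK j.
Qed.

End MC.
Section Pauli.
Variable R : realType.
Local Notation C := R[i].
Local Notation P := (Pauli R).

Definition Ic : C := 'i%C.
Lemma Pauli_clean : P = triple (mx2 1 0 0 (-1)) (mx2 0 1 1 0) (mx2 0 Ic (- Ic) 0).
Proof. reflexivity. Qed.
Lemma Paulibar_clean : Pauli_bar R = triple (mx2 1 0 0 (-1)) (mx2 0 1 1 0) (- mx2 0 Ic (- Ic) 0).
Proof. reflexivity. Qed.
Lemma IcI : Ic * Ic = -1.
Proof. by rewrite /Ic -expr2 sqr_i. Qed.

Definition o0 : 'I_2 := ord0.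
Definition o1 : 'I_2 := @Ordinal 2 1 isT.
Definition q0 : 'I_3 := ord0.
Definition q1 : 'I_3 := @Ordinal 3 1 isT.
Definition q2 : 'I_3 := @Ordinal 3 2 isT.

Lemma sum2 (V : zmodType) (F : 'I_2 -> V) : \sum_a F a = F o0 + F o1.
Proof.
rewrite !big_ord_recl big_ord0 addr0 /=.
by congr (F _ + F _); apply: val_inj.
Qed.

Lemma sum3 (V : zmodType) (F : 'I_3 -> V) : \sum_a F a = F q0 + F q1 + F q2.
Proof.
rewrite !big_ord_recl big_ord0 addr0 addrA /=.
by congr (F _ + F _ + F _); apply: val_inj.
Qed.

Lemma ord2P (a : 'I_2) : a = o0 \/ a = o1.
Proof. by case: a => [[|[|//]]] h; [left|right]; apply: val_inj. Qed.

Lemma ord3P (a : 'I_3) : [\/ a = q0, a = q1 | a = q2].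
Proof. by case: a => [[|[|[|//]]]] h; [apply: Or31|apply: Or32|apply: Or33]; apply: val_inj. Qed.

Definition sgn2 (a : 'I_2) : C := if (a : nat) == 0%N then 1 else -1.
Definition flip2 (a : 'I_2) : 'I_2 := if (a : nat) == 0%N then o1 else o0.

Definition krausK n (B : 'M[C]_(2 * n)) (l : 'I_(2 * n)) : 'M[C]_(2, n) :=
  \matrix_(a, c) (sgn2 a * B l (mxtens_index (flip2 a, c))).

Lemma sgn2_conj a : (sgn2 a)^* = sgn2 a.
Proof. by rewrite /sgn2; case: ifP => _; rewrite ?rmorphN ?rmorph1. Qed.

Lemma conj_sgn2M a (x : C) : (sgn2 a * x)^* = sgn2 a * x^*.
Proof. by rewrite /sgn2; case: ifP => _; rewrite ?mul1r ?mulN1r ?rmorphN. Qed.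

Lemma kraus_gen n (B : 'M[C]_(2 * n)) (Pm : 'M[C]_2) :
  \sum_l adjmx (krausK B l) *m Pm *m krausK B l =
  \matrix_(c, e) \sum_a \sum_b (sgn2 a * sgn2 b * Pm a b *
     (adjmx B *m B) (mxtens_index (flip2 a, c)) (mxtens_index (flip2 b, e))).
Proof.
apply/matrixP=> c e; rewrite summxE !mxE.
under eq_bigr do rewrite mxE.
transitivity (\sum_l \sum_b \sum_a adjmx (krausK B l) c a * Pm a b * krausK B l b e).
  by apply: eq_bigr => l _; apply: eq_bigr => b _; rewrite ?mxE mulr_suml.
rewrite exchange_big /=; under eq_bigr do rewrite exchange_big /=.
rewrite exchange_big /=; apply: eq_bigr => a _; apply: eq_bigr => b _.
rewrite mxE mulr_sumr; apply: eq_bigr => l _.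
rewrite !adjE !mxE conj_sgn2M; ring.
Qed.

End Pauli.
Section Kraus.
Variable R : realType.
Local Notation C := R[i].
Local Notation P := (Pauli R).

Lemma pencil_entry g d n (A : tup R g d) (X : tup R g n) x c y e :
  pencil A X (mxtens_index (x, c)) (mxtens_index (y, e)) =
  (x == y)%:R * (c == e)%:R - \sum_i A i x y * X i c e.
Proof.
rewrite /pencil [LHS]mxE tens1 tensmxE !mxE summxE; congr (_ - _).
by apply: eq_bigr => i _; rewrite tensmxE.
Qed.

Lemma pencil_entryZ g d n (s : C) (A : tup R g d) (X : tup R g n) x c y e :
  (s *: pencil A X) (mxtens_index (x, c)) (mxtens_index (y, e)) =
  s * ((x == y)%:R * (c == e)%:R - \sum_i A i x y * X i c e).
Proof. by rewrite mxE pencil_entry. Qed.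

Lemma kraus n (X : tup R 3 n) (B : 'M[C]_(2 * n)) :
  2^-1 *: pencil P X = adjmx B *m B ->
  \sum_l adjmx (krausK B l) *m krausK B l = 1%:M /\
  forall i, \sum_l adjmx (krausK B l) *m P i *m krausK B l = X i.
Proof.
move=> hB; split.
  transitivity (\sum_l adjmx (krausK B l) *m 1%:M *m krausK B l).
    by apply: eq_bigr => l _; rewrite mulmx1.
  rewrite kraus_gen.
  apply/matrixP=> c e; rewrite -hB !mxE.
  rewrite !sum2 /flip2 /= !pencil_entryZ !sum3 Pauli_clean !mxE /sgn2 /=.
  by field.
move=> i; rewrite kraus_gen -hB; apply/matrixP=> c e; rewrite !mxE.
rewrite !sum2 /flip2 /= !pencil_entryZ !sum3 Pauli_clean !mxE /sgn2 /=.
have hI := @IcI R.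
by have [->|->|->] := ord3P i; rewrite /= !mxE /=; field: hI.
Qed.

End Kraus.
Section PauliFacts.
Variable R : realType.
Local Notation C := R[i].
Local Notation P := (Pauli R).

Lemma conjN (x : C) : (- x)^* = - x^*.
Proof. exact: rmorphN. Qed.
Lemma conjM (x y : C) : (x * y)^* = x^* * y^*.
Proof. exact: rmorphM. Qed.

Lemma conjIc : (Ic R)^* = - Ic R.
Proof. by rewrite /Ic complexiE conjCi. Qed.

Lemma Pauli_SM : SM P.
Proof.
move=> i; apply/matrixP=> a b; rewrite adjE Pauli_clean.
have [->|->|->] := ord3P i; have [->|->] := ord2P a; have [->|->] := ord2P b;
  rewrite /= !mxE /= ?rmorph0 ?rmorph1 ?rmorphN1 ?conjN ?conjIc ?opprK //.
Qed.

Definition wf (p : 'I_2 * 'I_2) : C :=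
  if p.1 == p.2 then 0 else if (p.1 : nat) == 0%N then 1 else -1.

Lemma Pauli_in : spectra P P.
Proof.
split => //; split; first exact: Pauli_SM.
pose W : 'M[C]_(2, 2 * 2) := \matrix_(r, k) wf (mxtens_unindex k).
suff -> : pencil P P = adjmx W *m W by apply: psd_factor.
apply/matrixP=> p q.
case: (mxtens_indexP p) => x c; case: (mxtens_indexP q) => y e.
rewrite pencil_entry Pauli_clean !mxE sum2 sum3 !mxE !mxtens_indexK /wf.
have hI := @IcI R.
have [->|->] := ord2P x; have [->|->] := ord2P c; have [->|->] := ord2P y;
  have [->|->] := ord2P e; rewrite /= ?mxE /= ?rmorph0 ?rmorph1 ?rmorphN1; ring: hI.
Qed.

Lemma kraus_exists n (X : tup R 3 n) : spectra P X ->
  exists B : 'M[C]_(2 * n), 2^-1 *: pencil P X = adjmx B *m B.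
Proof.
move=> [_ [_ hp]]; apply: psd_factorize; apply: psd_scale => //.
by rewrite invr_ge0 ler0n.
Qed.

End PauliFacts.
Section Parts123.
Variable R : realType.
Local Notation C := R[i].
Local Notation P := (Pauli R).

Definition kterm n (B : 'M[C]_(2 * n)) (l : 'I_(2 * n)) : mcterm R 3 n :=
  existT (fun m => (tup R 3 m * 'M[C]_(m, n))%type) 2%N (P, krausK B l).

Lemma kraus_mcc n (X : tup R 3 n) : spectra P X ->
  exists B : 'M[C]_(2 * n), is_mcc (gpoint P) (kterm B) /\ mcc_val (kterm B) = X.
Proof.
move=> hX; have [B hB] := kraus_exists hX; have [h1 h2] := kraus hB.
exists B; split; first split => //.
  by move=> j; split => //; exists erefl; apply: functional_extensionality => i; rewrite castmx_id.
by apply: functional_extensionality => i; rewrite /mcc_val -h2.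
Qed.

Lemma DP_in_K n (X : tup R 3 n) (K : gset R 3) :
  (0 < n)%N -> matconvex K -> K 2%N P -> spectra P X -> K n X.
Proof.
move=> n0 [_ hK] KP hX; have [B [[_ hs] <-]] := kraus_mcc hX.
apply: hK => //; split => // j; split => //.
Qed.

Lemma DP_polar n m (X : tup R 3 n) (Y : tup R 3 m) :
  spectra P X -> spectra P Y -> psd (pencil Y X).
Proof.
move=> [_ [_ hX]] hY; have [B hB] := kraus_exists hY; have [h1 h2] := kraus hB.
have -> : Y = (fun i => \sum_l adjmx (krausK B l) *m P i *m krausK B l).
  by apply: functional_extensionality => i; rewrite h2.
rewrite pencil_left //; apply: psd_sum => l _; exact: psd_congr.
Qed.

Lemma part1 : gset_eq (spectra P) (polar (spectra P)).
Proof.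
move=> n n0 X; split.
  move=> hX; have [_ [sX _]] := hX; split => //; split => // m Y _ hY.
  exact: DP_polar.
move=> [_ [sX hp]]; split => //; split => //; apply: hp => //; exact: Pauli_in.
Qed.

Lemma part3 : gset_eq (spectra P) (mconv (gpoint P)).
Proof.
move=> n n0 X; split.
  move=> hX; split => // K mK sK; apply: DP_in_K => //; apply: sK => //.
  by exists erefl; apply: functional_extensionality => i; rewrite castmx_id.
move=> [_ h]; apply: h; first exact: spectra_matconvex.
move=> m m0 Y [e hY]; subst Y; case: m / e {m0}.
have -> : (fun i => castmx (erefl 2%N, erefl 2%N) (P i)) = P.
  by apply: functional_extensionality => i; rewrite castmx_id.
exact: Pauli_in.
Qed.

End Parts123.
Section Part2.
Variable R : realType.
Local Notation C := R[i].
Local Notation P := (Pauli R).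
Local Notation Pb := (Pauli_bar R).

Definition cmx m n (A : 'M[C]_(m, n)) := map_mx Num.conj A.
Definition tconj g n (X : tup R g n) : tup R g n := fun i => cmx (X i).

Lemma cmxK m n (A : 'M[C]_(m, n)) : cmx (cmx A) = A.
Proof. by apply/matrixP=> i j; rewrite !mxE conjCK. Qed.

Lemma tconjK g n (X : tup R g n) : tconj (tconj X) = X.
Proof. by apply: functional_extensionality => i; rewrite /tconj cmxK. Qed.

Lemma conj_sum (I : finType) (F : I -> C) : (\sum_i F i)^* = \sum_i (F i)^*.
Proof. exact: rmorph_sum. Qed.

Lemma pencil_conj g d n (A : tup R g d) (X : tup R g n) :
  pencil (tconj A) (tconj X) = cmx (pencil A X).
Proof.
rewrite /pencil /cmx map_mxB map_mx1; congr (_ - _).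
apply/matrixP=> p q; rewrite [RHS]mxE !summxE raddf_sum; apply: eq_bigr => i _.
by rewrite !mxE; symmetry; apply: conjM.
Qed.

Lemma SM_conj g n (X : tup R g n) : SM X -> SM (tconj X).
Proof.
move=> h i; apply/matrixP=> a b; rewrite adjE !mxE.
have /matrixP/(_ b a) := (h i : adjmx _ = _); rewrite adjE => <-.
by rewrite conjCK.
Qed.

Lemma psd_cmx n (A : 'M[C]_n) : psd (cmx A) -> psd A.
Proof. by move=> h; rewrite -[A]cmxK; apply: psd_conj. Qed.

Lemma Pb_conj : Pb = tconj P.
Proof.
apply: functional_extensionality => i; apply/matrixP=> a b.
rewrite /tconj /cmx Paulibar_clean Pauli_clean.
have [->|->|->] := ord3P i; have [->|->] := ord2P a; have [->|->] := ord2P b;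
  rewrite /= !mxE /= ?rmorph0 ?rmorph1 ?rmorphN1 ?conjN ?conjIc ?opprK ?oppr0 //.
Qed.

Lemma spectra_bar n (X : tup R 3 n) : spectra Pb X -> spectra P (tconj X).
Proof.
move=> [n0 [sX hX]]; split => //; split; first exact: SM_conj.
apply: psd_cmx; rewrite -pencil_conj tconjK -Pb_conj //.
Qed.

Lemma part2 : gset_eq (spectra Pb) (polar (spectra Pb)).
Proof.
move=> n n0 X; split.
  move=> hX; have [_ [sX _]] := hX; split => //; split => // m Y _ hY.
  apply: psd_cmx; rewrite -pencil_conj; exact: DP_polar (spectra_bar hX) (spectra_bar hY).
move=> [_ [sX hp]]; split => //; split => //; apply: hp => //.
split => //; split; first by rewrite Pb_conj; apply: SM_conj; apply: Pauli_SM.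
rewrite Pb_conj pencil_conj; apply: psd_conj; have [_ []] := Pauli_in R; done.
Qed.

End Part2.
Section Complete.
Variable R : realType.
Local Notation C := R[i].

Lemma adj_col m1 m2 n (A : 'M[C]_(m1, n)) (B : 'M[C]_(m2, n)) :
  adjmx (col_mx A B) = row_mx (adjmx A) (adjmx B).
Proof. by rewrite /adjmx map_col_mx tr_col_mx. Qed.

Lemma complete m (U0 : 'M[C]_(m, 2)) : adjmx U0 *m U0 = 1%:M ->
  exists r (S : 'M[C]_(r, m)), [/\ S *m adjmx S = 1%:M, S *m U0 = 0 & (2 + r)%N = m].
Proof.
move=> hU; set A := adjmx U0.
have Au : A \is unitarymx by apply/unitarymxP; rewrite adj_tstar /A adjK.
set O := orthomx Num.conj (mx_of_hermitian (hermitian1mx m)) A.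
exists (\rank O), (schmidt (row_base O)); split.
- rewrite -adj_tstar; apply/unitarymxP/schmidt_unitarymx; exact: rank_leq_col.
- have : (schmidt (row_base O) <= O)%MS.
    by rewrite eqmx_schmidt_free ?row_base_free // eq_row_base.
  by move/orthomx1P; rewrite adj_tstar /A adjK.
- rewrite rank_ortho (mxrank_unitary Au) subnKC //.
  by rewrite -(mxrank_unitary Au) rank_leq_col.
Qed.

End Complete.
Section Core.
Variable R : realType.
Local Notation C := R[i].
Local Notation P := (Pauli R).

Lemma core_gen m r (X : tup R 3 m) (U0 : 'M[C]_(m, 2)) (S : 'M[C]_(r, m)) :
  SM X -> adjmx U0 *m U0 = 1%:M -> (forall i, X i *m U0 = U0 *m P i) ->
  S *m adjmx S = 1%:M -> S *m U0 = 0 -> (2 + r)%N = m ->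
  let U := col_mx (adjmx U0) S in
  [/\ adjmx U *m U = 1%:M, U *m adjmx U = 1%:M &
      forall i, adjmx U *m dsum P (fun i => S *m X i *m adjmx S) i *m U = X i].
Proof.
move=> sX hU hXU hS hSU e U.
have hUU : U *m adjmx U = 1%:M.
  rewrite /U adj_col mul_col_row adjK hU hS hSU -adjM hSU adj0.
  by rewrite (scalar_mx_block 2 r 1).
have hUtU : adjmx U *m U = 1%:M.
  have Uu : U \is unitarymx by apply/unitarymxP; rewrite adj_tstar.
  have := mulmxKtV (1%:M : 'M[C]_m) Uu e; rewrite mul1mx adj_tstar; exact.
split => // i.
have hY : U *m X i *m adjmx U = dsum P (fun i => S *m X i *m adjmx S) i.
  rewrite /U /dsum adj_col mul_col_mx mul_col_row adjK.
  have h1 : S *m X i *m U0 = 0 by rewrite -mulmxA hXU mulmxA hSU mul0mx.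
  have h2 : adjmx U0 *m X i *m adjmx S = 0.
    by rewrite -(sX i) -adjM -[adjmx S]adjK -adjM adjK mulmxA h1 adj0.
  by rewrite -mulmxA hXU mulmxA hU mul1mx h1 h2.
by rewrite -hY !mulmxA hUtU mul1mx -mulmxA hUtU mulmx1.
Qed.

End Core.
Section Core2.
Variable R : realType.
Local Notation C := R[i].
Local Notation P := (Pauli R).

Lemma blk0 (A : 'M[C]_2) (B : 'M[C]_(2, 0)) (Cc : 'M[C]_(0, 2)) (D : 'M[C]_0) :
  block_mx A B Cc D = A.
Proof.
apply/matrixP=> a b.
case: (split_ordP a) => a' ->; last by case: a'.
case: (split_ordP b) => b' ->; last by case: b'.
rewrite block_mxEul; congr (A _ _); exact: val_inj.
Qed.

Lemma core m (X : tup R 3 m) (U0 : 'M[C]_(m, 2)) :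
  spectra P X -> adjmx U0 *m U0 = 1%:M -> (forall i, X i *m U0 = U0 *m P i) ->
  ueq X P \/ exists m' (Z : tup R 3 m'), (0 < m')%N /\ spectra P Z /\ ueq X (dsum P Z).
Proof.
move=> hX hU hXU; have [_ [sX _]] := hX.
have [r [S [hS hSU e]]] := complete hU.
have [h1 h2 h3] := core_gen sX hU hXU hS hSU e.
case: r S hS hSU e h1 h2 h3 => [|r] S hS hSU e h1 h2 h3.
  left; exists (col_mx (adjmx U0) S); split => //; split => // i.
  rewrite -[in RHS](h3 i); congr (_ *m _ *m _).
  by rewrite /dsum blk0.
right; exists r.+1, (fun i => S *m X i *m adjmx S); split => //; split; last first.
  by exists (col_mx (adjmx U0) S).
pose ts : 'I_1 -> mcterm R 3 r.+1 :=
  fun _ => existT (fun k => (tup R 3 k * 'M[C]_(k, r.+1))%type) m (X, adjmx S).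
have -> : (fun i => S *m X i *m adjmx S) = mcc_val ts.
  apply: functional_extensionality => i.
  by rewrite /mcc_val big_ord1 /mc_V /mc_pt /= adjK.
apply: (spectra_matconvex P).2 => //; split.
  by move=> j; split => //; rewrite /mc_level /=; rewrite -e.
by rewrite big_ord1 /mc_V /= adjK.
Qed.

End Core2.
Section Aux4.
Variable R : realType.
Local Notation C := R[i].
Local Notation P := (Pauli R).

Lemma tr_adj m n (Q : 'M[C]_(m, n)) :
  \tr (adjmx Q *m Q) = \sum_b \sum_a (Q a b)^* * Q a b.
Proof.
rewrite /mxtrace; apply: eq_bigr => b _; rewrite mxE; apply: eq_bigr => a _.
by rewrite adjE.
Qed.

Lemma tr_adj_ge0 m n (Q : 'M[C]_(m, n)) : 0 <= \tr (adjmx Q *m Q).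
Proof.
rewrite tr_adj; apply: sumr_ge0 => b _; apply: sumr_ge0 => a _.
by rewrite mulrC mul_conjC_ge0.
Qed.

Lemma tr_adj_eq0 m n (Q : 'M[C]_(m, n)) : \tr (adjmx Q *m Q) = 0 -> Q = 0.
Proof.
rewrite tr_adj => h; apply/matrixP=> a b; rewrite mxE.
have hb : forall b1, \sum_a (Q a b1)^* * Q a b1 = 0.
  move=> b1; apply: (psumr_eq0P _ h) => // c _; apply: sumr_ge0 => a1 _.
  by rewrite mulrC mul_conjC_ge0.
have hnn : forall a1 : 'I_m, true -> 0 <= (Q a1 b)^* * Q a1 b.
  by move=> a1 _; rewrite mulrC mul_conjC_ge0.
have h0 : (Q a b)^* * Q a b = 0 by apply: (psumr_eq0P hnn (hb b)).
by move/eqP: h0; rewrite mulrC mul_conjC_eq0 => /eqP.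
Qed.

Lemma adjsum0 (I : finType) (f : I -> nat) m n (Q : forall l, 'I_(f l) -> 'M[C]_(m, n)) :
  \sum_l \sum_r adjmx (Q l r) *m Q l r = 0 -> forall l r, Q l r = 0.
Proof.
move=> h; have ht := congr1 mxtrace h; rewrite mxtrace0 raddf_sum /= in ht.
have hl : forall l, \tr (\sum_r adjmx (Q l r) *m Q l r) = 0.
  move=> l; apply: (psumr_eq0P _ ht) => // l' _.
  by rewrite raddf_sum sumr_ge0 // => r _; apply: tr_adj_ge0.
move=> l r; apply: tr_adj_eq0; have := hl l; rewrite raddf_sum => h2.
by apply: (psumr_eq0P _ h2) => // r' _; apply: tr_adj_ge0.
Qed.

Lemma PP i : P i *m P i = 1%:M.
Proof.
apply/matrixP=> a b; rewrite Pauli_clean mxE sum2; have hI := @IcI R.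
by have [->|->|->] := ord3P i; have [->|->] := ord2P a; have [->|->] := ord2P b;
  rewrite /= !mxE /=; ring: hI.
Qed.

Lemma xNx (x : C) : x = - x -> x = 0.
Proof.
move=> h; have : x *+ 2 == 0 by rewrite mulr2n {1}h addNr.
by rewrite mulrn_eq0 /= => /eqP.
Qed.

Lemma comm_scalar (W : 'M[C]_2) :
  P q0 *m W = W *m P q0 -> P q1 *m W = W *m P q1 -> W = (W o0 o0)%:M.
Proof.
move=> h0 h1.
have e1 := congr1 (fun M : 'M[C]_2 => M o0 o1) h0.
have e2 := congr1 (fun M : 'M[C]_2 => M o1 o0) h0.
have e3 := congr1 (fun M : 'M[C]_2 => M o0 o0) h1.
have e4 := congr1 (fun M : 'M[C]_2 => M o0 o1) h1.
move: e1 e2 e3 e4; rewrite Pauli_clean /= !mxE !sum2 /= !mxE /=.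
rewrite !mul1r !mul0r !mulr0 !mulr1 !add0r !addr0 !mulrN1 !mulN1r.
move=> e1 e2 e3 e4.
have z01 : W o0 o1 = 0 by apply: xNx.
have z10 : W o1 o0 = 0 by apply: xNx; rewrite -e2 opprK.
apply/matrixP=> a b; rewrite !mxE.
by have [->|->] := ord2P a; have [->|->] := ord2P b; rewrite /= ?z01 ?z10 ?mulr1n ?mulr0n.
Qed.

End Aux4.
Section Part4.
Variable R : realType.
Local Notation C := R[i].
Local Notation P := (Pauli R).

Lemma dsumB (I : finType) (f : I -> nat) m n (F G : forall l, 'I_(f l) -> 'M[C]_(m, n)) :
  \sum_l \sum_r (F l r - G l r) = \sum_l \sum_r F l r - \sum_l \sum_r G l r.
Proof. by rewrite -sumrB; apply: eq_bigr => l _; rewrite sumrB. Qed.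

Lemma dsum_mull (I : finType) (f : I -> nat) m n p (A : 'M[C]_(p, m)) (F : forall l, 'I_(f l) -> 'M[C]_(m, n)) :
  \sum_l \sum_r (A *m F l r) = A *m \sum_l \sum_r F l r.
Proof. by rewrite mulmx_sumr; apply: eq_bigr => l _; rewrite mulmx_sumr. Qed.

Lemma dsum_mulr (I : finType) (f : I -> nat) m n p (A : 'M[C]_(n, p)) (F : forall l, 'I_(f l) -> 'M[C]_(m, n)) :
  \sum_l \sum_r (F l r *m A) = (\sum_l \sum_r F l r) *m A.
Proof. by rewrite mulmx_suml; apply: eq_bigr => l _; rewrite mulmx_suml. Qed.

Lemma adjP i : adjmx (P i) = P i.
Proof. exact: Pauli_SM. Qed.

Lemma comm_all (I : finType) (f : I -> nat) (W : forall l, 'I_(f l) -> 'M[C]_2) :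
  \sum_l \sum_r adjmx (W l r) *m W l r = 1%:M ->
  (forall i, \sum_l \sum_r adjmx (W l r) *m P i *m W l r = P i) ->
  forall i l r, P i *m W l r = W l r *m P i.
Proof.
move=> S1 S2 i.
suff h : forall l r, P i *m W l r - W l r *m P i = 0.
  by move=> l r; apply/eqP; rewrite -subr_eq0; apply/eqP.
apply: adjsum0.
have e : forall l r, adjmx (P i *m W l r - W l r *m P i) *m (P i *m W l r - W l r *m P i) =
  (adjmx (W l r) *m (P i *m P i) *m W l r - (adjmx (W l r) *m P i *m W l r) *m P i) -
  (P i *m (adjmx (W l r) *m P i *m W l r) - P i *m (adjmx (W l r) *m W l r) *m P i).
  move=> l r; rewrite adjB !adjM adjP mulmxBl !mulmxBr !mulmxA.
  done.
under eq_bigr => l _.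
  under eq_bigr => r _ do rewrite e.
  over.
rewrite !dsumB PP.
under eq_bigr => l _.
  under eq_bigr => r _ do rewrite mulmx1.
  over.
rewrite S1 dsum_mulr S2 dsum_mull S2.
have -> : \sum_l \sum_r P i *m (adjmx (W l r) *m W l r) *m P i
        = P i *m (\sum_l \sum_r adjmx (W l r) *m W l r) *m P i.
  by rewrite -dsum_mull -dsum_mulr.
by rewrite S1 mulmx1 PP !subrr.
Qed.

End Part4.
Section Part4b.
Variable R : realType.
Local Notation C := R[i].
Local Notation P := (Pauli R).

Lemma single m (X : tup R 3 m) (V : 'M[C]_(m, 2)) k (K : 'I_k -> 'M[C]_(2, m)) (w : 'I_k -> C) :
  spectra P X -> V != 0 ->
  \sum_r adjmx (K r) *m K r = 1%:M ->
  (forall i, \sum_r adjmx (K r) *m P i *m K r = X i) ->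
  (forall r, K r *m V = (w r)%:M) ->
  ueq X P \/ exists m' (Z : tup R 3 m'), (0 < m')%N /\ spectra P Z /\ ueq X (dsum P Z).
Proof.
move=> hX Vnz hK1 hK2 hW.
have hVK : V = \sum_r w r *: adjmx (K r).
  rewrite -[LHS]mul1mx -hK1 mulmx_suml; apply: eq_bigr => r _.
  by rewrite -mulmxA hW mul_mx_scalar.
have hXV : forall i, X i *m V = V *m P i.
  move=> i; rewrite -hK2 mulmx_suml {2}hVK mulmx_suml; apply: eq_bigr => r _.
  by rewrite -mulmxA hW mul_mx_scalar scalemxAl.
pose c := \sum_r w r * (w r)^*.
have hVV : adjmx V *m V = c%:M.
  rewrite {2}hVK mulmx_sumr /c raddf_sum; apply: eq_bigr => r _.
  by rewrite -scalemxAr -adjM hW adj_scalar scale_scalar_mx.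
have c0 : 0 <= c by apply: sumr_ge0 => r _; apply: mul_conjC_ge0.
have cn0 : c != 0.
  apply: contra Vnz => /eqP c00; apply/eqP; apply: tr_adj_eq0.
  by rewrite hVV c00 mxtrace_scalar mul0rn.
pose s := (sqrtC c)^-1.
have s0 : 0 <= s by rewrite invr_ge0 sqrtC_ge0.
have sc : s * s * c = 1.
  rewrite /s -invfM -expr2 sqrtCK mulVf //.
have hU : adjmx (s *: V) *m (s *: V) = 1%:M.
  rewrite adjZ conj_Creal ?ger0_real // -scalemxAr -scalemxAl hVV scalerA.
  by rewrite scale_scalar_mx sc.
apply: (core hX hU) => i.
by rewrite -scalemxAr hXV scalemxAl.
Qed.

End Part4b.
Section Part4c.
Variable R : realType.
Local Notation C := R[i].
Local Notation P := (Pauli R).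

Lemma part4 : free_extreme (spectra P) P.
Proof.
split => //; split; first exact: Pauli_in.
move=> k ts [hK hV] hnz hval j.
have hB : forall l, exists B : 'M[C]_(2 * mc_level (ts l)),
    2^-1 *: pencil P (mc_pt (ts l)) = adjmx B *m B.
  by move=> l; apply: kraus_exists; have [_ ?] := hK l.
pose Bs l := proj1_sig (constructive_indefinite_description _ (hB l)).
have hBs : forall l, 2^-1 *: pencil P (mc_pt (ts l)) = adjmx (Bs l) *m Bs l.
  by move=> l; rewrite /Bs; case: constructive_indefinite_description.
pose K l := krausK (Bs l).
have hK1 : forall l, \sum_r adjmx (K l r) *m K l r = 1%:M.
  by move=> l; have [] := kraus (hBs l).
have hK2 : forall l i, \sum_r adjmx (K l r) *m P i *m K l r = mc_pt (ts l) i.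
  by move=> l; have [] := kraus (hBs l).
pose W l r := K l r *m mc_V (ts l).
have S1 : \sum_l \sum_r adjmx (W l r) *m W l r = 1%:M.
  rewrite -hV; apply: eq_bigr => l _.
  transitivity (adjmx (mc_V (ts l)) *m (\sum_r adjmx (K l r) *m K l r) *m mc_V (ts l)).
    rewrite mulmx_sumr mulmx_suml; apply: eq_bigr => r _.
    by rewrite /W adjM !mulmxA.
  by rewrite hK1 mulmx1.
have S2 : forall i, \sum_l \sum_r adjmx (W l r) *m P i *m W l r = P i.
  move=> i; rewrite -[in RHS]hval /mcc_val; apply: eq_bigr => l _.
  rewrite -hK2 mulmx_sumr mulmx_suml; apply: eq_bigr => r _.
  by rewrite /W adjM !mulmxA.
have Q0 := comm_all S1 S2.
apply: (single (K := K j) (w := fun r => W j r o0 o0)).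
- by have [_ ?] := hK j.
- exact: hnz.
- exact: hK1.
- exact: hK2.
- by move=> r; apply: comm_scalar; apply: Q0.
Qed.

End Part4c.
Section Part56.
Variable R : realType.
Local Notation C := R[i].
Local Notation P := (Pauli R).

Lemma comm11 (A B : 'M[C]_1) : A *m B = B *m A.
Proof. by rewrite [A]mx11_scalar [B]mx11_scalar -!scalar_mxM mulrC. Qed.

Lemma P01 : P q0 *m P q1 != P q1 *m P q0.
Proof.
apply/eqP => /(congr1 (fun M : 'M[C]_2 => M o0 o1)).
rewrite Pauli_clean /= !mxE !sum2 /= !mxE /=.
rewrite ?mul1r ?mul0r ?addr0 ?add0r ?mulr1 => h.
have : (2%:R : C) == 0 by rewrite mulr2n {2}h subrr.
by rewrite pnatr_eq0.
Qed.

Lemma part5 n (X : tup R 3 n) : (0 < n)%N ->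
  free_extreme (spectra P) X -> ueq X P.
Proof.
move=> n0 [_ [hX hfe]].
have [B hB] := kraus_exists hX; have [h1 h2] := kraus hB.
pose K := krausK B.
pose A := [pred l | K l != 0].
pose ts : 'I_#|A| -> mcterm R 3 n :=
  fun j => existT (fun m => (tup R 3 m * 'M[C]_(m, n))%type) 2%N (P, K (enum_val j)).
have drop : forall (F : 'I_(2 * n) -> 'M[C]_n), (forall l, K l = 0 -> F l = 0) ->
    \sum_l F l = \sum_(j < #|A|) F (enum_val j).
  move=> F hF; rewrite -(big_enum_val (A := A)) (bigID (mem A)) /=.
  rewrite [X in _ + X]big1 ?addr0 // => l; rewrite !inE negbK => /eqP; exact: hF.
have hmcc : is_mcc (spectra P) ts.
  split; first by move=> j; split => //; exact: Pauli_in.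
  rewrite -h1 (drop (fun l => adjmx (K l) *m K l)) // => l ->.
  by rewrite mulmx0.
have hval : mcc_val ts = X.
  apply: functional_extensionality => i; rewrite -h2 /mcc_val.
  by rewrite (drop (fun l => adjmx (K l) *m P i *m K l)) // => l ->; rewrite mulmx0.
have nz : forall j, mc_V (ts j) != 0 by move=> j; exact: (enum_valP j).
have hA : (0 < #|A|)%N.
  rewrite lt0n; apply/negP => /eqP hA0.
  move: hmcc => [_]; rewrite /=.
  have -> : \sum_(j < #|A|) adjmx (mc_V (ts j)) *m mc_V (ts j) = 0.
    by apply: big1 => j _; exfalso; move: (ltn_ord j); rewrite {2}hA0.
  move/(congr1 (fun M : 'M[C]_n => M (Ordinal n0) (Ordinal n0))).
  by rewrite !mxE eqxx /= => /eqP; rewrite eq_sym oner_eq0.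
have [[U [u1 [u2 u3]]]|[m [Z [m0 [hZ [U [u1 [u2 u3]]]]]]]] :=
  hfe _ ts hmcc nz hval (Ordinal hA).
  exists (adjmx U); rewrite adjK; split => //; split => // i.
  have u3p : forall i, adjmx U *m X i *m U = P i := u3.
  by rewrite -(u3p i) !mulmxA u2 mul1mx -mulmxA u2 mulmx1.
exfalso.
have e : (n + m)%N = 2%N.
  have := congr1 mxtrace u2; rewrite mxtrace_mulC u1 !mxtrace1 => /eqP.
  by rewrite eqr_nat => /eqP.
have en : n = 1%N by lia.
have em : m = 1%N by lia.
subst n m.
apply/negP: P01.
have ep : forall i, P i = adjmx U *m dsum X Z i *m U by move=> i; rewrite u3.
rewrite !ep !mulmxA -[adjmx U *m _ *m U *m adjmx U]mulmxA u2 mulmx1.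
rewrite -[adjmx U *m dsum X Z q1 *m U *m adjmx U]mulmxA u2 mulmx1.
rewrite -!mulmxA [dsum X Z q0 *m _]mulmxA [dsum X Z q1 *m _]mulmxA.
rewrite /dsum !mulmx_block !mulmx0 !mul0mx !addr0 !add0r.
by rewrite negbK (comm11 (X q0)) (comm11 (Z q0)).
Qed.

Lemma part6 : gset_eq (spectra P) (mconv (free_extreme (spectra P))).
Proof.
move=> n n0 X; split.
  move=> hX; split => // K mK sK; apply: DP_in_K => //.
  by apply: sK => //; exact: part4.
move=> [_ h]; apply: h; first exact: spectra_matconvex.
by move=> m m0 Y [_ [hY _]].
Qed.

End Part56.

Theorem mainTheorem1 (R : realType) :
  gset_eq (spectra (Pauli R)) (polar (spectra (Pauli R))) /\
  gset_eq (spectra (Pauli_bar R)) (polar (spectra (Pauli_bar R))) /\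
  gset_eq (spectra (Pauli R)) (mconv (gpoint (Pauli R))) /\
  free_extreme (spectra (Pauli R)) (Pauli R) /\
  (forall n (X : tup R 3 n), (0 < n)%N ->
     free_extreme (spectra (Pauli R)) X -> ueq X (Pauli R)) /\
  gset_eq (spectra (Pauli R)) (mconv (free_extreme (spectra (Pauli R)))).
Proof.
split; first exact: part1.
split; first exact: part2.
split; first exact: part3.
split; first exact: part4.
split; first exact: part5.
exact: part6.
Qed.
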